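(* Let $R$ be a ring and $\mathfrak{p}$ a proper left ideal of $R$. Then: (1) $\mathfrak{p}$ is extremely prime iff $(\mathfrak{p}:b)\subseteq\mathfrak{p}$ for all $b\in R\setminus\mathfrak{p}$. (2) $\mathfrak{p}$ is completely prime iff $(\mathfrak{p}:b)=\mathfrak{p}$ for all $b\in R\setminus\mathfrak{p}$ such that $\mathfrak{p}\subseteq(\mathfrak{p}:b)$. (3) $\mathfrak{p}$ is structurally prime iff $\operatorname{id}((\mathfrak{p}:b))\subseteq\mathfrak{p}$ for all $b\in R\setminus\mathfrak{p}$. (4) $\mathfrak{p}$ is weakly prime iff $\operatorname{id}((\mathfrak{p}:b))\subseteq\mathfrak{p}$ for all $b\in R\setminus\mathfrak{p}$ such that $\mathfrak{p}R\subseteq(\mathfrak{p}:b)$.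
   Context: Rings are associative and unital, not necessarily commutative. For a left ideal $I$ and $a\in R$, $(I:a)=\{x\in R: xa\in I\}$ (a left ideal). For a left ideal $I$, $\operatorname{id}(I)$ denotes the largest two-sided ideal of $R$ contained in $I$. A left ideal $\mathfrak{p}\neq R$ is: extremely prime if $ab\in\mathfrak{p}$ implies $a\in\mathfrak{p}$ or $b\in\mathfrak{p}$ (for $a,b\in R$); completely prime if $ab\in\mathfrak{p}$ and $\mathfrak{p}b\subseteq\mathfrak{p}$ imply $a\in\mathfrak{p}$ or $b\in\mathfrak{p}$; structurally prime if for left ideals $A,B$, $AB\subseteq\mathfrak{p}$ implies $A\subseteq\mathfrak{p}$ or $B\subseteq\mathfrak{p}$; weakly prime if for left ideals $A,B$, $AB\subseteq\mathfrak{p}$ and $\mathfrak{p}B\subseteq\mathfrak{p}$ imply $A\subseteq\mathfrak{p}$ or $B\subseteq\mathfrak{p}$. *)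

(* Defs.v *)
From mathcomp Require Import all_boot all_algebra.
Set Implicit Arguments. Unset Strict Implicit. Unset Printing Implicit Defensive.
Import GRing.Theory.
Local Open Scope ring_scope.

Section Defs.
Variable R : pzRingType.
Implicit Types (A B I J : R -> Prop).

Definition subsetR A B : Prop := forall x, A x -> B x.

Definition left_ideal I : Prop :=
  [/\ I 0, (forall x y, I x -> I y -> I (x + y)) & (forall r x, I x -> I (r * x))].

Definition two_sided_ideal I : Prop :=
  [/\ I 0, (forall x y, I x -> I y -> I (x + y)),
      (forall r x, I x -> I (r * x)) & (forall r x, I x -> I (x * r))].

Definition proper_lideal I : Prop := exists x, ~ I x.

Definition set_mul A B : R -> Prop := fun x =>
  exists s : seq (R * R),
    (forall p, p \in s -> A p.1 /\ B p.2) /\ x = \sum_(p <- s) p.1 * p.2.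

Definition mul_full A : R -> Prop := set_mul A (fun _ => True).

Definition colon I (a : R) : R -> Prop := fun x => I (x * a).

(* id(I): the largest two-sided ideal contained in I, realized as the union
   of all two-sided ideals contained in I. *)
Definition id_core I : R -> Prop := fun x =>
  exists J, two_sided_ideal J /\ subsetR J I /\ J x.

Definition extremely_prime P : Prop :=
  proper_lideal P /\ forall a b, P (a * b) -> P a \/ P b.

Definition completely_prime P : Prop :=
  proper_lideal P /\ forall a b, P (a * b) -> (forall x, P x -> P (x * b)) -> P a \/ P b.

Definition structurally_prime P : Prop :=
  proper_lideal P /\ forall A B, left_ideal A -> left_ideal B ->
    subsetR (set_mul A B) P -> subsetR A P \/ subsetR B P.

Definition weakly_prime P : Prop :=
  proper_lideal P /\ forall A B, left_ideal A -> left_ideal B ->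
    subsetR (set_mul A B) P -> subsetR (set_mul P B) P ->
    subsetR A P \/ subsetR B P.
End Defs.

(* Main.v *)
Require Import Defs.
From mathcomp Require Import all_boot all_algebra.
From Stdlib Require Import Classical.
Local Open Scope ring_scope.
Import GRing.Theory.
Set Implicit Arguments.
Unset Strict Implicit.

Lemma sum_in (R : pzRingType) (P : R -> Prop) (s : seq (R * R)) (f : R * R -> R) :
  left_ideal P -> (forall p, p \in s -> P (f p)) -> P (\sum_(p <- s) f p).
Proof.
move=> [P0 PD PM]; elim: s => [|q s IH] H; first by rewrite big_nil.
rewrite big_cons; apply: PD; first by apply: H; rewrite mem_head.
by apply: IH => p ps; apply: H; rewrite inE ps orbT.
Qed.

Lemma set_mul_sub (R : pzRingType) (P A B : R -> Prop) :
  left_ideal P -> (forall a b, A a -> B b -> P (a * b)) -> subsetR (set_mul A B) P.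
Proof.
move=> hP H x [s [Hs ->]]; apply: sum_in => // p /Hs [] ; exact: H.
Qed.

Lemma AR_ideal (R : pzRingType) (A : R -> Prop) :
  left_ideal A -> two_sided_ideal (set_mul A (fun _ => True)).
Proof.
move=> [A0 AD AM]; split.
- by exists [::]; split => //; rewrite big_nil.
- move=> x y [s [Hs ->]] [t [Ht ->]]; exists (s ++ t); split; last by rewrite big_cat.
  by move=> p; rewrite mem_cat => /orP [/Hs|/Ht].
- move=> r x [s [Hs ->]]; exists [seq (r * p.1, p.2) | p <- s]; split.
    move=> p /mapP [q qs ->] /=; split => //; apply: AM; exact: (Hs q qs).1.
  by rewrite big_map big_distrr /=; apply: eq_bigr => p _; rewrite mulrA.
- move=> r x [s [Hs ->]]; exists [seq (p.1, p.2 * r) | p <- s]; split.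
    move=> p /mapP [q qs ->] /=; split => //; exact: (Hs q qs).1.
  by rewrite big_map big_distrl /=; apply: eq_bigr => p _; rewrite mulrA.
Qed.

Lemma A_sub_AR (R : pzRingType) (A : R -> Prop) : subsetR A (set_mul A (fun _ => True)).
Proof.
move=> a Aa; exists [:: (a, 1)]; split; last by rewrite big_seq1 mulr1.
by move=> p; rewrite inE => /eqP -> .
Qed.

Lemma AR_colon (R : pzRingType) (P A B : R -> Prop) (b : R) :
  left_ideal P -> left_ideal B -> B b -> subsetR (set_mul A B) P ->
  subsetR (set_mul A (fun _ => True)) (colon P b).
Proof.
move=> hP [_ _ BM] Bb HAB x [s [Hs ->]]; rewrite /colon big_distrl /=.
apply: sum_in => // p ps; rewrite -mulrA; apply: HAB.
exists [:: (p.1, p.2 * b)]; split; last by rewrite big_seq1.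
move=> q; rewrite inE => /eqP -> /=; split; [exact: (Hs p ps).1 | exact: BM].
Qed.

Lemma Rb_ideal (R : pzRingType) (b : R) : left_ideal (fun y => exists r, y = r * b).
Proof.
split.
- by exists 0; rewrite mul0r.
- by move=> x y [r ->] [t ->]; exists (r + t); rewrite mulrDl.
- by move=> r x [t ->]; exists (r * t); rewrite mulrA.
Qed.

Lemma JRb (R : pzRingType) (P J : R -> Prop) (b : R) :
  left_ideal P -> two_sided_ideal J -> subsetR J (colon P b) ->
  subsetR (set_mul J (fun y => exists r, y = r * b)) P.
Proof.
move=> hP [_ _ _ JM] HJ; apply: set_mul_sub => // a y Ja [r ->].
rewrite mulrA; apply: HJ; exact: JM.
Qed.

Theorem proposition2p25 (R : pzRingType) (P : R -> Prop) :
  left_ideal P -> proper_lideal P ->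
  [/\ (extremely_prime P <->
         forall b, ~ P b -> subsetR (colon P b) P),
      (completely_prime P <->
         forall b, ~ P b -> subsetR P (colon P b) ->
           forall x, colon P b x <-> P x),
      (structurally_prime P <->
         forall b, ~ P b -> subsetR (id_core (colon P b)) P)
    & (weakly_prime P <->
         forall b, ~ P b -> subsetR (mul_full P) (colon P b) ->
           subsetR (id_core (colon P b)) P)].
Proof.
move=> hP hprop; have hP' := hP; case: hP' => [P0 PD PM].
have Rb1 : forall b, ~ P b -> ~ subsetR (fun y => exists r, y = r * b) P.
  by move=> b nb H; apply: nb; apply: H; exists 1; rewrite mul1r.
split.
- split.
  + by move=> [_ H] b nb x /H [] .
  + move=> H; split => // a b ab; case: (classic (P b)) => [|nb]; [by right|].
    by left; apply: (H b nb).
- split.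
  + move=> [_ H] b nb Hb x; split; last exact: Hb.
    by move=> /H /(_ Hb) [].
  + move=> H; split => // a b ab Hb; case: (classic (P b)) => [|nb]; [by right|].
    by left; apply/(H b nb Hb).
- split.
  + move=> [_ H] b nb x [J [hJ [HJ Jx]]].
    have hJ' := hJ; case: hJ' => J0 JD JL JR.
    case: (H J _ (And3 J0 JD JL) (Rb_ideal b) (JRb hP hJ HJ)) => [K|K]; first exact: K.
    by case: (Rb1 b nb).
  + move=> H; split => // A B hA hB HAB.
    case: (classic (subsetR B P)) => [|nB]; [by right|left].
    have [b [Bb nb]] : exists b, B b /\ ~ P b.
      apply: NNPP => C; apply: nB => y By; apply: NNPP => ny; apply: C; by exists y.
    move=> a Aa; apply: (H b nb); exists (set_mul A (fun _ => True)); split.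
      exact: AR_ideal.
    split; [exact: (AR_colon hP hB Bb HAB) | exact: A_sub_AR].
- split.
  + move=> [_ H] b nb HPR x [J [hJ [HJ Jx]]].
    have hJ' := hJ; case: hJ' => J0 JD JL JR.
    have HPB : subsetR (set_mul P (fun y => exists r, y = r * b)) P.
      apply: set_mul_sub => // p y Pp [r ->]; rewrite mulrA; apply: HPR.
      exists [:: (p, r)]; split; last by rewrite big_seq1.
      by move=> q; rewrite inE => /eqP ->.
    case: (H J _ (And3 J0 JD JL) (Rb_ideal b) (JRb hP hJ HJ) HPB) => [K|K]; first exact: K.
    by case: (Rb1 b nb).
  + move=> H; split => // A B hA hB HAB HPB.
    case: (classic (subsetR B P)) => [|nB]; [by right|left].
    have [b [Bb nb]] : exists b, B b /\ ~ P b.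
      apply: NNPP => C; apply: nB => y By; apply: NNPP => ny; apply: C; by exists y.
    move=> a Aa; apply: (H b nb).
      exact: (AR_colon hP hB Bb HPB).
    exists (set_mul A (fun _ => True)); split.
      exact: AR_ideal.
    split; [exact: (AR_colon hP hB Bb HAB) | exact: A_sub_AR].
Qed.
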